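(* Let $(\mathcal{T},\mathcal{F},\mathcal{S})$ be a tree of fusion systems satisfying Hypothesis $(H)$ with distinguished vertex $v_*$, and put $S:=\mathcal{S}(v_* )$ (with all $\mathcal{S}(v)$, $\mathcal{S}(e)$ identified with subgroups of $S$ as described in the context). Let $$\mathcal{F}_\mathcal{T}:=\langle \operatorname{Hom}_{\mathcal{F}(v)}(P,\mathcal{S}(v)) \mid P\le \mathcal{S}(v),\ v\in V(\mathcal{T})\rangle_S .$$ Then $\mathcal{F}_\mathcal{T}$ (together with the inclusions $\mathcal{S}(v)\hookrightarrow S$, $\mathcal{S}(e)\hookrightarrow S$) is a colimit of the functor $\mathcal{F}$ in the category of fusion systems. Moreover, every $\alpha\in\operatorname{Hom}_{\mathcal{F}_\mathcal{T}}(P,S)$ can be written as a composite $$P=P_0\xrightarrow{\alpha_0}P_1\xrightarrow{\alpha_1}\cdots\xrightarrow{\alpha_{n-1}}P_n=P\alpha,$$ where there are vertices $v_0,\dots,v_{n-1}$ of $\mathcal{T}$ with $v_i$ and $v_{i+1}$ adjacent in $\mathcal{T}$ for $0\le i\le n-2$, $P_i,P_{i+1}\le \mathcal{S}(v_i)$ and $\alpha_i\in\operatorname{Hom}_{\mathcal{F}(v_i)}(P_i,P_{i+1})$ for each $i$.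
   Context: Conventions: homomorphisms act on the right ($x\varphi$), and $\alpha\circ\beta$ means ''first $\alpha$, then $\beta$''. $\iota_P^Q$ denotes inclusion $P\hookrightarrow Q$. A fusion system $\mathcal{F}$ on a finite $p$-group $S$ is a category whose objects are the subgroups of $S$, with $\operatorname{Hom}_S(P,Q)\subseteq\operatorname{Hom}_\mathcal{F}(P,Q)\subseteq\operatorname{Inj}(P,Q)$ (conjugation maps by elements of $S$, resp. all injective homomorphisms), such that each morphism factors as an $\mathcal{F}$-isomorphism onto its image followed by an inclusion. For a set $\mathcal{C}$ of injective maps between subgroups of $S$, $\langle\mathcal{C}\rangle_S$ is the smallest fusion system on $S$ containing $\mathcal{C}$. A morphism from a fusion system $\mathcal{F}$ on $S$ to a fusion system $\mathcal{E}$ on $T$ is a homomorphism $\varphi:S\to T$ such that for all $P,R\le S$ and $\alpha\in\operatorname{Hom}_\mathcal{F}(P,R)$ there is $\beta\in\operatorname{Hom}_\mathcal{E}(P\varphi,R\varphi)$ with $\alpha\circ\varphi|_R=\varphi|_P\circ\beta$; it is injective if the induced maps $\operatorname{Hom}_\mathcal{F}(P,S)\to\operatorname{Hom}_\mathcal{E}(P\varphi,T)$ are injective. This gives the category of fusion systems. A finite tree $\mathcal{T}$ is regarded as a category whose objects are its vertices and edges, with a unique morphism $f_{ev}:e\to v$ whenever vertex $v$ is incident on edge $e$. A tree of fusion systems $(\mathcal{T},\mathcal{F},\mathcal{S})$ consists of a finite tree $\mathcal{T}$, a functor $\mathcal{S}$ from $\mathcal{T}$ to groups assigning finite $p$-groups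 $\mathcal{S}(v),\mathcal{S}(e)$ and sending each $f_{ev}$ to a monomorphism $\mathcal{S}(e)\to\mathcal{S}(v)$, and a functor $\mathcal{F}$ assigning a fusion system $\mathcal{F}(v)$ on $\mathcal{S}(v)$ and $\mathcal{F}(e)$ on $\mathcal{S}(e)$, such that $\mathcal{S}(f_{ev})$ is an injective morphism of fusion systems $\mathcal{F}(e)\to\mathcal{F}(v)$. Hypothesis $(H)$: there is a vertex $v_*$ such that for every vertex $v\ne v_*$, if $e$ is the edge incident on $v$ lying on the unique minimal path from $v$ to $v_*$, then $\mathcal{S}(f_{ev}):\mathcal{S}(e)\to\mathcal{S}(v)$ is an isomorphism. Under $(H)$, using these isomorphisms and the maps $\mathcal{S}(f_{ev})$, every $\mathcal{S}(v)$ and $\mathcal{S}(e)$ is identified with a subgroup of $S=\mathcal{S}(v_* )$ (which is the colimit of $\mathcal{S}$) so that all $\mathcal{S}(f_{ev})$ become inclusions, and each $\mathcal{F}(e)$ becomes a subsystem of $\mathcal{F}(v)$ for $v$ incident on $e$. *)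

(* Defs.v *)
From HB Require Import structures.
From mathcomp Require Import all_boot all_fingroup all_solvable.
Set Implicit Arguments. Unset Strict Implicit. Unset Printing Implicit Defensive.

Local Open Scope group_scope.

(* Maps act on the right in the paper; here a morphism P -> Q is a function
   f : gT -> gT, considered only through its restriction to P.
   "first f then g" is the function (g \o f). *)

(* A candidate fusion system: F P Q f  means  f \in Hom_F(P,Q). *)
Definition fsys (gT : finGroupType) := {set gT} -> {set gT} -> (gT -> gT) -> Prop.

Definition inj_hom (gT : finGroupType) (P Q : {set gT}) (f : gT -> gT) :=
  [/\ {in P &, {morph f : x y / x * y}}, {in P &, injective f} & f @: P \subset Q].

Definition is_fusion_system (gT : finGroupType) (S : {set gT}) (F : fsys gT) :=
  [/\
      (forall P Q f, F P Q f ->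
         [/\ group_set P, group_set Q, P \subset S, Q \subset S & inj_hom P Q f]),
      (* morphisms are maps P -> Q: only the restriction to P matters *)
      (forall P Q f g, F P Q f -> {in P, f =1 g} -> F P Q g),
      (forall (P Q : {group gT}) (s : gT), P \subset S -> Q \subset S -> s \in S ->
         P :^ s \subset Q -> F P Q (fun x => x ^ s)),
      (forall P Q R f g, F P Q f -> F Q R g -> F P R (g \o f)) &
      (forall P Q f, F P Q f ->
         F P (f @: P) f /\
         exists g, F (f @: P) P g /\ {in P, forall x, g (f x) = x})].

Definition gen_fusion (gT : finGroupType) (S : {set gT}) (C : fsys gT) : fsys gT :=
  fun P Q f => forall F : fsys gT, is_fusion_system S F ->
    (forall P' Q' f', C P' Q' f' -> F P' Q' f') -> F P Q f.

Definition is_fs_morphism (gT rT : finGroupType) (S : {set gT}) (F : fsys gT)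
    (T : {set rT}) (E : fsys rT) (phi : gT -> rT) :=
  [/\ {in S &, {morph phi : x y / x * y}}, phi @: S \subset T &
      forall (P R : {set gT}) alpha, P \subset S -> R \subset S -> F P R alpha ->
        exists beta, E (phi @: P) (phi @: R) beta /\
                     {in P, forall x, beta (phi x) = phi (alpha x)}].

Definition is_inj_fs_morphism (gT rT : finGroupType) (S : {set gT}) (F : fsys gT)
    (T : {set rT}) (E : fsys rT) (phi : gT -> rT) :=
  is_fs_morphism S F T E phi /\
  forall (P : {set gT}) alpha1 alpha2 beta1 beta2, P \subset S ->
    F P S alpha1 -> F P S alpha2 ->
    E (phi @: P) T beta1 -> E (phi @: P) T beta2 ->
    {in P, forall x, beta1 (phi x) = phi (alpha1 x)} ->
    {in P, forall x, beta2 (phi x) = phi (alpha2 x)} ->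
    {in phi @: P, beta1 =1 beta2} -> {in P, alpha1 =1 alpha2}.

Section Trees.
Variables (V Ed : finType) (ends : Ed -> V * V).

Definition incident (e : Ed) (v : V) := v = (ends e).1 \/ v = (ends e).2.
Definition joins (e : Ed) (a b : V) := ends e = (a, b) \/ ends e = (b, a).
Definition adjacent (a b : V) := a <> b /\ exists e, joins e a b.

(* a walk u = vs 0, es 0, vs 1, ..., es (k-1), vs k = w *)
Definition walk (u w : V) (k : nat) (vs : nat -> V) (es : nat -> Ed) :=
  [/\ vs 0 = u, vs k = w & forall i, i < k -> joins (es i) (vs i) (vs i.+1)].

Definition tree_connected := forall u w, exists k vs es, walk u w k vs es.

Definition tree_acyclic := ~ exists u k vs es,
  [/\ 0 < k, walk u u k vs es &
      forall i j, i < k -> j < k -> es i = es j -> i = j].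

Definition is_tree := [/\ inhabited V, tree_connected & tree_acyclic].

Definition first_edge_towards (e : Ed) (v w : V) := exists k vs es,
  [/\ 0 < k, walk v w k vs es,
      (forall i j, i <= k -> j <= k -> vs i = vs j -> i = j) & es 0 = e].

End Trees.

(* All S(v), S(e) are subgroups of the ambient group gT and the maps S(f_ev)
   are inclusions S(e) \subset S(v). *)
Definition tree_of_fusion_systems (p : nat) (V Ed : finType) (ends : Ed -> V * V)
    (gT : finGroupType) (Sv : V -> {group gT}) (Se : Ed -> {group gT})
    (Fv : V -> fsys gT) (Fe : Ed -> fsys gT) :=
  [/\ prime p, is_tree ends,
      (forall v, p.-group (Sv v) /\ is_fusion_system (Sv v) (Fv v)),
      (forall e, p.-group (Se e) /\ is_fusion_system (Se e) (Fe e)) &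
      (forall e v, incident ends e v ->
         Se e \subset Sv v /\
         is_inj_fs_morphism (Se e) (Fe e) (Sv v) (Fv v) (fun x => x))].

(* Hypothesis (H), in identified form: S(f_ev) is an isomorphism, i.e. S(e) = S(v) *)
Definition hypH (V Ed : finType) (ends : Ed -> V * V) (gT : finGroupType)
    (Sv : V -> {group gT}) (Se : Ed -> {group gT}) (vstar : V) :=
  forall v e, v <> vstar -> first_edge_towards ends e v vstar ->
    (Se e : {set gT}) = Sv v.

Definition tree_generators (V : finType) (gT : finGroupType)
    (Sv : V -> {group gT}) (Fv : V -> fsys gT) : fsys gT :=
  fun P Q f => exists v, (Q = Sv v) /\ Fv v P Q f.

Definition fs_cocone (V Ed : finType) (ends : Ed -> V * V)
    (gT : finGroupType) (Sv : V -> {group gT}) (Se : Ed -> {group gT})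
    (Fv : V -> fsys gT) (Fe : Ed -> fsys gT)
    (rT : finGroupType) (T : {set rT}) (E : fsys rT)
    (psiv : V -> gT -> rT) (psie : Ed -> gT -> rT) :=
  [/\ forall v, is_fs_morphism (Sv v) (Fv v) T E (psiv v),
      forall e, is_fs_morphism (Se e) (Fe e) T E (psie e) &
      forall e v, incident ends e v -> {in Se e, psie e =1 psiv v}].

Definition fs_colimit (p : nat) (V Ed : finType) (ends : Ed -> V * V)
    (gT : finGroupType) (Sv : V -> {group gT}) (Se : Ed -> {group gT})
    (Fv : V -> fsys gT) (Fe : Ed -> fsys gT) (S : {group gT}) (FS : fsys gT) :=
  [/\ p.-group S, is_fusion_system S FS,
      fs_cocone ends Sv Se Fv Fe S FS (fun _ x => x) (fun _ x => x) &
      forall (rT : finGroupType) (T : {group rT}) (E : fsys rT)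
             (psiv : V -> gT -> rT) (psie : Ed -> gT -> rT),
        p.-group T -> is_fusion_system T E ->
        fs_cocone ends Sv Se Fv Fe T E psiv psie ->
        exists theta : gT -> rT,
          [/\ is_fs_morphism S FS T E theta,
              (forall v, {in Sv v, theta =1 psiv v}),
              (forall e, {in Se e, theta =1 psie e}) &
              forall theta' : gT -> rT, is_fs_morphism S FS T E theta' ->
                (forall v, {in Sv v, theta' =1 psiv v}) ->
                (forall e, {in Se e, theta' =1 psie e}) ->
                {in S, theta' =1 theta}]].

Fixpoint chain_comp (T : Type) (a : nat -> T -> T) (n : nat) (x : T) : T :=
  match n with 0 => x | k.+1 => a k (chain_comp a k x) end.

(* Main.v *)
Require Import Defs.
From HB Require Import structures.
From mathcomp Require Import all_boot all_fingroup all_solvable zify.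
Set Implicit Arguments. Unset Strict Implicit. Unset Printing Implicit Defensive.
Local Open Scope group_scope.

Section FusionGen.
Variables (gT : finGroupType) (S : {set gT}) (F : fsys gT).
Hypothesis FS : is_fusion_system S F.

Lemma fs_ax1 P Q f : F P Q f ->
  [/\ group_set P, group_set Q, P \subset S, Q \subset S & inj_hom P Q f].
Proof. by case: FS => H _ _ _ _; apply: H. Qed.

Lemma fs_ext P Q f g : F P Q f -> {in P, f =1 g} -> F P Q g.
Proof. by case: FS => _ H _ _ _; apply: H. Qed.

Lemma fs_comp P Q R f g : F P Q f -> F Q R g -> F P R (g \o f).
Proof. by case: FS => _ _ _ H _; apply: H. Qed.

Lemma fs_img P Q f : F P Q f -> F P (f @: P) f.
Proof. by case: FS => _ _ _ _ H Hf; case: (H _ _ _ Hf). Qed.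

Lemma fs_inv P Q f : F P Q f ->
  exists g, F (f @: P) P g /\ {in P, forall x, g (f x) = x}.
Proof. by case: FS => _ _ _ _ H Hf; case: (H _ _ _ Hf). Qed.

Lemma fs_incl (P Q : {set gT}) : group_set P -> group_set Q -> Q \subset S -> P \subset Q ->
  F P Q (fun x => x).
Proof.
move=> gP gQ sQS sPQ.
case: FS => _ Hext Hc _ _.
have := Hc (Group gP) (Group gQ) 1 (subset_trans sPQ sQS) sQS
  (subsetP (subset_trans sPQ sQS) 1 (group1 (Group gP))).
rewrite /= conjsg1 => /(_ sPQ) H.
by apply: Hext H _ => x _; rewrite conjg1.
Qed.

Lemma fs_restr (P Q P' : {set gT}) g : F P Q g -> group_set P' -> P' \subset P ->
  F P' (g @: P') g.
Proof.
move=> Fg gP' sP'P.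
have [gP _ sPS _ _] := fs_ax1 Fg.
have H := fs_comp (fs_incl gP' gP sPS sP'P) Fg.
exact: (fs_img H).
Qed.

Lemma fs_retarget (P Q R : {set gT}) f : F P Q f -> f @: P \subset R -> group_set R ->
  R \subset S -> F P R f.
Proof.
move=> Ff sfR gR sRS.
have Fi := fs_img Ff.
have [_ gfP _ _ _] := fs_ax1 Fi.
exact: (fs_comp Fi (fs_incl gfP gR sRS sfR)).
Qed.

End FusionGen.


Section HomLemmas.
Variables (gT rT : finGroupType).

Lemma morph1_in (D : {set gT}) (f : gT -> rT) : group_set D ->
  {in D &, {morph f : x y / x * y}} -> f 1 = 1.
Proof.
move=> gD fM.
have D1 : (1 : gT) \in D by case/group_setP: gD.
apply: (@mulgI _ (f 1)); by rewrite -fM // !mulg1.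
Qed.

Lemma morphV_in (D : {set gT}) (f : gT -> rT) x : group_set D ->
  {in D &, {morph f : x y / x * y}} -> x \in D -> f x^-1 = (f x)^-1.
Proof.
move=> gD fM xD.
have xVD : x^-1 \in D by by rewrite (@groupV _ (Group gD)). 
apply/eqP; rewrite eq_sym eq_invg_mul -fM // mulgV.
by rewrite (morph1_in gD fM).
Qed.

Lemma group_set_img (D P : {set gT}) (f : gT -> rT) : group_set D ->
  {in D &, {morph f : x y / x * y}} -> group_set P -> P \subset D ->
  group_set (f @: P).
Proof.
move=> gD fM gP sPD.
have fMP : {in P &, {morph f : x y / x * y}}.
  by move=> x y xP yP; apply: fM; apply: (subsetP sPD).
apply/group_setP; split.
  by rewrite -(morph1_in gP fMP); apply: imset_f; case/group_setP: gP.
move=> _ _ /imsetP[x xP ->] /imsetP[y yP ->].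
by rewrite -fMP //; apply: imset_f; case/group_setP: gP => _; apply.
Qed.

End HomLemmas.

Lemma inj_hom_ext (gT : finGroupType) (P Q : {set gT}) f g : group_set P ->
  inj_hom P Q f -> {in P, f =1 g} -> inj_hom P Q g.
Proof.
move=> gP [fM fI sfQ] e; have PM := @groupM _ (Group gP).
split.
- by move=> x y xP yP /=; rewrite -!e ?fM // PM.
- by move=> x y xP yP; rewrite -!e //; apply: fI.
- by rewrite -(eq_in_imset e).
Qed.

Lemma inj_hom_comp (gT : finGroupType) (P Q R : {set gT}) f g :
  inj_hom P Q f -> inj_hom Q R g -> inj_hom P R (g \o f).
Proof.
case=> fM fI sfQ [gM gI sgR].
have fQ : forall x, x \in P -> f x \in Q.
  by move=> x xP; apply: (subsetP sfQ); apply: imset_f.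
split.
- by move=> x y xP yP /=; rewrite fM // gM // fQ.
- by move=> x y xP yP /= /gI; rewrite !fQ // => /(_ isT isT) /fI; apply.
- apply/subsetP=> _ /imsetP[x xP ->]; apply: (subsetP sgR).
  by apply: imset_f; apply: fQ.
Qed.

Lemma inj_hom_conj (gT : finGroupType) (P Q : {set gT}) s :
  P :^ s \subset Q -> inj_hom P Q (conjg^~ s).
Proof.
move=> sPQ; split.
- by move=> x y _ _ /=; rewrite conjMg.
- by move=> x y _ _; apply: conjg_inj.
- by [].
Qed.

Lemma inj_hom_inv (gT : finGroupType) (P Q : {set gT}) f g : group_set P ->
  inj_hom P Q f -> {in P, forall x, g (f x) = x} -> inj_hom (f @: P) P g.
Proof.
move=> gP [fM fI _] gK; split.
+ move=> _ _ /imsetP[x xP ->] /imsetP[y yP ->].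
  rewrite -fM // gK ?gK //.
  by rewrite (@groupM _ (Group gP)).
+ move=> _ _ /imsetP[x xP ->] /imsetP[y yP ->].
  by rewrite !gK // => ->.
+ apply/subsetP => _ /imsetP[_ /imsetP[x xP ->] ->].
  by rewrite gK.
Qed.

Lemma inv_exists (gT : finGroupType) (P : {set gT}) (f : gT -> gT) :
  {in P &, injective f} -> exists g, {in P, forall x, g (f x) = x}.
Proof.
move=> fI; exists (fun y => odflt y [pick x in P | f x == y]).
move=> x xP; case: pickP => [x' /andP[x'P /eqP e]|] /=.
  by apply: fI.
by move/(_ x); rewrite xP eqxx.
Qed.

Section GenFusion.
Variables (gT : finGroupType) (S : {set gT}) (C : fsys gT) (F0 : fsys gT).
Hypotheses (F0fs : is_fusion_system S F0) (CF0 : forall P Q f, C P Q f -> F0 P Q f).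

Lemma gen_sub (F : fsys gT) P Q f : is_fusion_system S F ->
  (forall P Q f, C P Q f -> F P Q f) -> gen_fusion S C P Q f -> F P Q f.
Proof. by move=> FF CF H; apply: H. Qed.

Lemma gen_fs : is_fusion_system S (gen_fusion S C).
Proof.
split.
- by move=> P Q f H; apply: (fs_ax1 F0fs); apply: H.
- by move=> P Q f g H e F FF CF; apply: (fs_ext FF (H F FF CF) e).
- move=> P Q s sPS sQS sS sPQ F FF CF.
  by case: FF => _ _ Hc _ _; apply: Hc.
- by move=> P Q R f g H1 H2 F FF CF; apply: (fs_comp FF (H1 F FF CF) (H2 F FF CF)).
- move=> P Q f H; split.
    by move=> F FF CF; apply: (fs_img FF (H F FF CF)).
  have [_ _ _ _ [_ fI _]] := fs_ax1 F0fs (H F0 F0fs CF0).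
  pose g y := odflt y [pick x in P | f x == y].
  have gK : {in P, forall x, g (f x) = x}.
    move=> x xP; rewrite /g; case: pickP => [x' /andP[x'P /eqP e]|] /=.
      by apply: fI.
    by move/(_ x); rewrite xP eqxx.
  exists g; split => // F FF CF.
  have [g' [Fg' g'K]] := fs_inv FF (H F FF CF).
  apply: (fs_ext FF Fg') => _ /imsetP[x xP ->].
  by rewrite g'K // gK.
Qed.

End GenFusion.

Section Walks.
Variables (V Ed : finType) (ends : Ed -> V * V).

Lemma simple_walk_of u w k vs es : walk ends u w k vs es ->
  exists k' vs' es', walk ends u w k' vs' es' /\
    forall i j, i <= k' -> j <= k' -> vs' i = vs' j -> i = j.
Proof.
elim: k {-2}k (leqnn k) u w vs es => [|n IH] k lek u w vs es Hw.
  move: lek; rewrite leqn0 => /eqP Ek; subst k.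
  exists 0, vs, es; split=> // i j; rewrite !leqn0 => /eqP -> /eqP -> //.
case: (boolP [exists i : 'I_k.+1, exists j : 'I_k.+1, (vs i == vs j) && (i < j)]).
  case/existsP=> i /existsP[j /andP[/eqP eij ltij]].
  have ik := ltn_ord i; have jk := ltn_ord j.
  pose d := j - i.
  pose vs' m := if m <= i then vs m else vs (m + d).
  pose es' m := if m < i then es m else es (m + d).
  case: Hw => H0 Hk Hs.
  apply: (IH (k - d) _ _ _ vs' es'); first by rewrite /d; lia.
  split.
  - by rewrite /vs' leq0n.
  - rewrite /vs'; case: ifP => H.
      have -> : k - d = i by rewrite /d in H *; lia.
      by rewrite eij -Hk; congr vs; rewrite /d in H *; lia.
    by rewrite -Hk; congr vs; rewrite /d; lia.
  - move=> m mk; rewrite /vs' /es'.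
    case: (ltnP m i) => mi.
      by rewrite (ltnW mi); apply: Hs; lia.
    have -> : (if m <= i then vs m else vs (m + d)) = vs (m + d).
      case: ifP => // mi'; have -> : m = i by lia.
      by rewrite eij; congr vs; rewrite /d; lia.
    have -> : m.+1 + d = (m + d).+1 by lia.
    by apply: Hs; rewrite /d in mk *; lia.
move=> Hn; exists k, vs, es; split=> // i j ik jk eij.
case: (ltngtP i j) => // [lij|lji].
  by case/negP: Hn; apply/existsP; exists (Ordinal (ik : i < k.+1));
     apply/existsP; exists (Ordinal (jk : j < k.+1)); rewrite /= eij eqxx.
by case/negP: Hn; apply/existsP; exists (Ordinal (jk : j < k.+1));
   apply/existsP; exists (Ordinal (ik : i < k.+1)); rewrite /= eij eqxx.
Qed.

Lemma joins_sym e a b : joins ends e a b -> joins ends e b a.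
Proof. by case=> H; [right|left]. Qed.

Lemma adjacent_sym a b : adjacent ends a b -> adjacent ends b a.
Proof. by case=> ne [e H]; split; [move=> E; apply: ne|exists e; apply: joins_sym]. Qed.

Lemma joins_incid1 e a b : joins ends e a b -> incident ends e a.
Proof. by rewrite /joins /incident; case=> ->; [left|right]. Qed.

Lemma joins_incid2 e a b : joins ends e a b -> incident ends e b.
Proof. by rewrite /joins /incident; case=> ->; [right|left]. Qed.

End Walks.

Lemma chain_comp_eq (T : Type) (a b : nat -> T -> T) k :
  (forall i, i < k -> a i =1 b i) -> chain_comp a k =1 chain_comp b k.
Proof.
elim: k => // k IH e x /=.
by rewrite IH ?e // => i ik; apply: e; apply: ltnW.
Qed.

Section Tree.
Variables (p : nat) (V Ed : finType) (ends : Ed -> V * V) (gT : finGroupType)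
  (Sv : V -> {group gT}) (Se : Ed -> {group gT}) (Fv : V -> fsys gT)
  (Fe : Ed -> fsys gT) (vstar : V).
Hypotheses (HT : tree_of_fusion_systems p ends Sv Se Fv Fe)
  (HH : hypH ends Sv Se vstar).

Lemma Fvfs v : is_fusion_system (Sv v) (Fv v).
Proof. by case: HT => _ _ H _ _; case: (H v). Qed.

Lemma Se_sub e v : incident ends e v -> Se e \subset Sv v.
Proof. by case: HT => _ _ _ _ H /H []. Qed.

Lemma tree_ind (Q : V -> Prop) : Q vstar ->
  (forall v w e, v <> vstar -> v <> w -> joins ends e v w ->
     (Se e : {set gT}) = Sv v -> Q w -> Q v) ->
  forall v, Q v.
Proof.
move=> Q0 Hs v.
have [_ [_ conn _] _ _ _] := HT.
have [k0 [vs0 [es0 Hw]]] := conn v vstar.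
have [k' [vs' [es' [Hw' simp]]]] := simple_walk_of Hw.
clear Hw vs0 es0 k0.
elim: k' v vs' es' Hw' simp => [|k IH] v vs es [H0 Hk Hst] simp.
  by rewrite -H0 Hk.
have nevs : v <> vstar.
  by move=> E; have := simp 0 k.+1 isT (leqnn _); rewrite H0 Hk E => /(_ erefl).
have nevw : v <> vs 1%N.
  by move=> E; have := simp 0 1%N isT isT; rewrite H0 E => /(_ erefl).
apply: (Hs v (vs 1%N) (es 0)) => //.
- by rewrite -H0; apply: Hst.
- apply: HH => //; exists k.+1, vs, es; split=> //.
- apply: (IH (vs 1%N) (fun i => vs i.+1) (fun i => es i.+1)).
    by split=> // i ik; apply: Hst.
  by move=> i j ik jk E; have := simp i.+1 j.+1 ik jk E; case.
Qed.

Lemma Sv_sub v : Sv v \subset Sv vstar.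
Proof.
elim/tree_ind: v => // v w e _ _ J E sw.
by rewrite -E; apply: subset_trans sw; apply: Se_sub; apply: joins_incid2 J.
Qed.

Definition link (u v : V) := u = v \/ adjacent ends u v.

Inductive ch : V -> V -> {set gT} -> (gT -> gT) -> Prop :=
| ch_one v (P : {set gT}) a : Fv v P (a @: P) a -> ch v v P a
| ch_snoc s u v (P : {set gT}) f a : ch s u P f -> link u v ->
    Fv v (f @: P) (a @: (f @: P)) a -> ch s v P (a \o f).

Lemma ch_group s t P f : ch s t P f -> group_set (f @: P).
Proof.
case=> [v Q a H|s' u v Q g a _ _ H].
  by case: (fs_ax1 (Fvfs v) H).
by rewrite imset_comp; case: (fs_ax1 (Fvfs v) H).
Qed.

Lemma ch_concat w t Q g : ch w t Q g -> forall s u P f, ch s u P f ->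
  link u w -> f @: P \subset Q -> ch s t P (g \o f).
Proof.
elim=> [v Q' a H|s' x y Q' g' a Hc IH L H] s u P f Hf Luw sfQ.
  apply: (ch_snoc Hf Luw).
  by apply: (fs_restr (Fvfs v) H (ch_group Hf) sfQ).
have := IH _ _ _ _ Hf Luw sfQ => H1.
apply: (ch_snoc H1 L).
apply: (fs_restr (Fvfs y) H (ch_group H1)).
by rewrite imset_comp; apply: imsetS.
Qed.

Lemma link_sym u v : link u v -> link v u.
Proof. by case=> [->|H]; [left|right; apply: adjacent_sym]. Qed.

Lemma ch_rev s t P f : ch s t P f ->
  exists g, ch t s (f @: P) g /\ {in P, forall x, g (f x) = x}.
Proof.
elim=> [v Q a H|s' u v Q f' a Hc [g [Hg gK]] L H].
  have [b [Fb bK]] := fs_inv (Fvfs v) H.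
  exists b; split=> //; apply: ch_one.
  have -> : b @: (a @: Q) = Q.
    by rewrite -imset_comp (eq_in_imset (bK : {in Q, b \o a =1 id})) imset_id.
  by rewrite -{2}[Q](_ : b @: (a @: Q) = Q) //;
     rewrite -imset_comp (eq_in_imset (bK : {in Q, b \o a =1 id})) imset_id.
have [b [Fb bK]] := fs_inv (Fvfs v) H.
have E : b @: (a @: (f' @: Q)) = f' @: Q.
  by rewrite -imset_comp (eq_in_imset (bK : {in f' @: Q, b \o a =1 id})) imset_id.
have Cb : ch v v (a @: (f' @: Q)) b by apply: ch_one; rewrite E.
exists (g \o b); split.
  rewrite imset_comp; apply: (ch_concat Hg Cb (link_sym L)).
  by rewrite E.
move=> x xQ /=; rewrite bK ?gK //.
exact: imset_f.
Qed.


Lemma ch_id v (P : {set gT}) : group_set P -> P \subset Sv v -> ch v v P (fun x => x).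
Proof.
move=> gP sP; apply: ch_one; rewrite imset_id.
exact: (fs_incl (Fvfs v) gP gP sP (subxx P)).
Qed.

Lemma up v : forall P : {set gT}, group_set P -> P \subset Sv v ->
  ch v vstar P (fun x => x).
Proof.
elim/tree_ind: v => [P gP sP|v w e nv nvw J E IH P gP sP]; first exact: ch_id.
have sPw : P \subset Sv w.
  by apply: subset_trans sP _; rewrite -E; apply: Se_sub; apply: joins_incid2 J.
have L : link v w by right; split=> //; exists e.
have sub : (fun x => x) @: P \subset P by rewrite imset_id.
have H := ch_concat (IH P gP sPw) (ch_id gP sP) L sub.
exact: H.
Qed.

Definition FC (P Q : {set gT}) (f : gT -> gT) :=
  [/\ group_set P, group_set Q, P \subset Sv vstar, Q \subset Sv vstar
    & inj_hom P Q f] /\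
  exists f', ch vstar vstar P f' /\ {in P, f =1 f'}.

Lemma FC_fs : is_fusion_system (Sv vstar) FC.
Proof.
split.
- by move=> P Q f [].
- move=> P Q f g [[gP gQ sP sQ fI] [f' [Cf ef]]] e; split.
    by split=> //; apply: inj_hom_ext fI e.
  by exists f'; split=> // x xP; rewrite -e ?ef.
- move=> P Q s sP sQ sS sPQ; split.
    by split=> //; [apply: groupP|apply: groupP|apply: inj_hom_conj].
  exists (conjg^~ s); split=> //; apply: ch_one.
  case: (Fvfs vstar) => _ _ Hc _ _.
  exact: (fs_img (Fvfs vstar) (Hc P Q s sP sQ sS sPQ)).
- move=> P Q R f g [[gP gQ sP sQ fI] [f' [Cf ef]]] [[_ gR _ sR gI] [g' [Cg eg]]].
  split; first by split=> //; apply: inj_hom_comp fI gI.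
  have sfQ : f @: P \subset Q by case: fI.
  exists (g' \o f'); split.
    apply: (ch_concat Cg Cf (or_introl erefl)).
    by rewrite -(eq_in_imset ef).
  move=> x xP /=; rewrite -ef // eg //.
  by apply: (subsetP sfQ); apply: imset_f.
- move=> P Q f [[gP gQ sP sQ fI] [f' [Cf ef]]].
  have sfQ : f @: P \subset Q by case: fI.
  have Ei : f @: P = f' @: P by apply: eq_in_imset.
  have gfP : group_set (f @: P) by rewrite Ei; apply: ch_group Cf.
  have sfS : f @: P \subset Sv vstar by apply: subset_trans sQ.
  case: fI => fM fInj _.
  split.
    split; last by exists f'.
    by split.
  have [g [Cg gK]] := ch_rev Cf.
  have gK' : {in P, forall x, g (f x) = x} by move=> x xP; rewrite ef // gK.
  exists g; split; last exact: gK'.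
  split; last by exists g; split=> //; rewrite Ei.
  split=> //; split.
  + move=> _ _ /imsetP[x xP ->] /imsetP[y yP ->].
    rewrite -fM // gK' ?gK' //.
    by rewrite (@groupM _ (Group gP)).
  + move=> _ _ /imsetP[x xP ->] /imsetP[y yP ->].
    by rewrite !gK' // => ->.
  + apply/subsetP => _ /imsetP[_ /imsetP[x xP ->] ->].
    by rewrite gK'.
Qed.

Lemma FC_gen P Q f : tree_generators Sv Fv P Q f -> FC P Q f.
Proof.
case=> v [EQ Ff]; subst Q.
have [gP gQ sP _ fI] := fs_ax1 (Fvfs v) Ff.
split; first by split=> //; [apply: subset_trans sP (Sv_sub v)|apply: Sv_sub].
have [g [Cg gK]] := ch_rev (up gP sP).
rewrite imset_id in Cg.
have EgP : g @: P = P by rewrite (eq_in_imset (gK : {in P, g =1 id})) imset_id.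
have Fi := fs_img (Fvfs v) Ff.
have [_ gfP _ sfP _] := fs_ax1 (Fvfs v) Fi.
have C2 : ch vstar v P (f \o g).
  by apply: (ch_snoc Cg (or_introl erefl)); rewrite EgP.
have C3 := ch_concat (up gfP sfP) C2 (or_introl erefl).
exists ((fun x => x) \o (f \o g)); split.
  by apply: C3; rewrite imset_comp EgP.
by move=> x xP /=; rewrite gK.
Qed.


Lemma ch_strict s t P f : ch s t P f ->
  exists m (vs : nat -> V) (Ps : nat -> {set gT}) (alphas : nat -> gT -> gT),
  [/\ vs m = t, Ps 0 = P, Ps m.+1 = f @: P,
      (forall i, i.+1 < m.+1 -> adjacent ends (vs i) (vs i.+1)) &
      (forall i, i < m.+1 -> Fv (vs i) (Ps i) (Ps i.+1) (alphas i))] /\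
  {in P, f =1 chain_comp alphas m.+1}.
Proof.
elim=> [v Q a H|s' u v Q f' a Hc [m [vs [Ps [al [[Hm H0 Hn Had Hst] Hag]]]]] L H].
  exists 0, (fun _ => v), (fun i => if i == 0 then Q else a @: Q), (fun _ => a).
  split; [split|] => //.
  by move=> i; rewrite ltnS leqn0 => /eqP ->.
case: L => [Euv|Adj].
  subst v.
  exists m, vs, (fun i => if i == m.+1 then a @: (f' @: Q) else Ps i),
    (fun i => if i == m then a \o al i else al i).
  split; [split|] => //.
  - by rewrite eqxx -imset_comp.
  - move=> i im; have [->|ne] := eqVneq i m.
      rewrite eqxx (_ : (m == m.+1) = false); last by lia.
      rewrite Hm; apply: (fs_comp (Fvfs u) _ H).
      by rewrite -Hn -Hm; apply: Hst.
    rewrite (_ : (i == m.+1) = false); last by lia.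
    rewrite (_ : (i.+1 == m.+1) = false); last by lia.
    exact: Hst.
  - move=> x xQ /=; rewrite eqxx Hag //=.
    by rewrite (chain_comp_eq (b := al)) // => i im; rewrite (_ : (i == m) = false) //; lia.
exists m.+1, (fun i => if i == m.+1 then v else vs i),
  (fun i => if i == m.+2 then a @: (f' @: Q) else Ps i),
  (fun i => if i == m.+1 then a else al i).
split; [split|] => //.
- by rewrite eqxx.
- by rewrite eqxx -imset_comp.
- move=> i im; have [->|ne] := eqVneq i m.
    by rewrite eqxx (_ : (m == m.+1) = false) ?Hm //; lia.
  rewrite (_ : (i == m.+1) = false); last by lia.
  rewrite (_ : (i.+1 == m.+1) = false); last by lia.
  by apply: Had; lia.
- move=> i im; have [->|ne] := eqVneq i m.+1.
    by rewrite !eqxx (_ : (m.+1 == m.+2) = false) ?Hn //; lia.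
  rewrite (_ : (i == m.+2) = false); last by lia.
  rewrite (_ : (i.+1 == m.+2) = false); last by lia.
  by apply: Hst; lia.
- move=> x xQ /=; rewrite eqxx Hag //= (_ : (m == m.+1) = false); last by lia.
  by rewrite (chain_comp_eq (b := al)) // => i im; rewrite (_ : (i == m.+1) = false) //; lia.
Qed.


Definition FT := gen_fusion (Sv vstar) (tree_generators Sv Fv).

Lemma FT_fs : is_fusion_system (Sv vstar) FT.
Proof. exact: (gen_fs FC_fs FC_gen). Qed.

Lemma FT_FC P Q f : FT P Q f -> FC P Q f.
Proof. exact: (gen_sub FC_fs FC_gen). Qed.

Lemma Fv_FT v P R alpha : Fv v P R alpha -> FT P R alpha.
Proof.
move=> H; have [gP gR sP sR [_ _ saR]] := fs_ax1 (Fvfs v) H.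
have H1 : Fv v P (Sv v) alpha.
  by apply: (fs_retarget (Fvfs v) H) => //; [apply: subset_trans sR|apply: groupP].
have H2 : FT P (Sv v) alpha by move=> F FF CF; apply: CF; exists v.
apply: (fs_retarget FT_fs H2 saR gR).
exact: subset_trans sR (Sv_sub v).
Qed.

Lemma FT_cocone : fs_cocone ends Sv Se Fv Fe (Sv vstar) FT (fun _ x => x) (fun _ x => x).
Proof.
split=> //.
- move=> v; split=> //; first by rewrite imset_id; apply: Sv_sub.
  by move=> P R alpha _ _ H; exists alpha; split=> //; rewrite !imset_id; apply: Fv_FT H.
- move=> e; have inc : incident ends e (ends e).1 by left.
  have [_ _ _ _ Hi] := HT; have [sE [[_ sI Hom] _]] := Hi e _ inc.
  split=> //; first by rewrite imset_id; apply: subset_trans sE (Sv_sub _).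
  move=> P R alpha sP sR H; have [beta [Fb eb]] := Hom P R alpha sP sR H.
  by exists beta; split=> //; apply: Fv_FT Fb.
Qed.

Section Universal.
Variables (rT : finGroupType) (T : {group rT}) (E : fsys rT)
  (psiv : V -> gT -> rT) (psie : Ed -> gT -> rT).
Hypotheses (EF : is_fusion_system T E)
  (Hco : fs_cocone ends Sv Se Fv Fe T E psiv psie).

Lemma psi_eq v : {in Sv v, psiv v =1 psiv vstar}.
Proof.
elim/tree_ind: v => // v w e _ _ J Ee IH x xv.
have [_ _ Hc] := Hco.
have xe : x \in Se e by rewrite Ee.
rewrite -(Hc e v (joins_incid1 J)) // (Hc e w (joins_incid2 J)) // IH //.
by apply: (subsetP (Se_sub (joins_incid2 J))).
Qed.

Let th := psiv vstar.
Let S := Sv vstar.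

Lemma thM : {in S &, {morph th : x y / x * y}}.
Proof. by have [H _ _] := Hco; case: (H vstar). Qed.

Lemma thS : th @: S \subset T.
Proof. by have [H _ _] := Hco; case: (H vstar). Qed.

Lemma th_conj x s : x \in S -> s \in S -> th (x ^ s) = th x ^ th s.
Proof.
move=> xS sS; have gS : group_set S := groupP _.
have sVS : s^-1 \in S by rewrite groupV.
by rewrite conjgE conjgE thM ?groupM // thM // (morphV_in gS thM sS).
Qed.

Definition G (P R : {set gT}) (alpha : gT -> gT) :=
  [/\ group_set P, group_set R, P \subset S, R \subset S & inj_hom P R alpha] /\
  exists beta, E (th @: P) (th @: R) beta /\
               {in P, forall x, beta (th x) = th (alpha x)}.

Lemma G_fs : is_fusion_system S G.
Proof.
have gS : group_set S := groupP _.
have thsub : forall P : {set gT}, P \subset S -> th @: P \subset T.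
  by move=> P sP; apply: subset_trans (imsetS _ sP) thS.
split.
- by move=> P Q f [].
- move=> P Q f g [[gP gQ sP sQ fI] [b [Eb eb]]] e; split.
    by split=> //; apply: inj_hom_ext fI e.
  by exists b; split=> // x xP; rewrite eb // e.
- move=> P Q s sP sQ sS sPQ; split.
    by split=> //; [apply: groupP|apply: groupP|apply: inj_hom_conj].
  have gtP := group_set_img gS thM (groupP P) sP.
  have gtQ := group_set_img gS thM (groupP Q) sQ.
  exists (conjg^~ (th s)); split.
    case: EF => _ _ Hc _ _.
    apply: (Hc (Group gtP) (Group gtQ)) => /=.
    + exact: thsub.
    + exact: thsub.
    + by apply: (subsetP thS); apply: imset_f.
    + apply/subsetP=> _ /imsetP[_ /imsetP[x xP ->] ->].
      rewrite -th_conj; last by []; last by apply: (subsetP sP).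
      by apply: imset_f; apply: (subsetP sPQ); apply: imset_f.
  by move=> x xP /=; rewrite th_conj //; apply: (subsetP sP).
- move=> P Q R f g [[gP gQ sP sQ fI] [b1 [Eb1 eb1]]] [[_ gR _ sR gI] [b2 [Eb2 eb2]]].
  split; first by split=> //; apply: inj_hom_comp fI gI.
  exists (b2 \o b1); split; first exact: (fs_comp EF Eb1 Eb2).
  move=> x xP /=; rewrite eb1 // eb2 //.
  by case: fI => _ _ sfQ; apply: (subsetP sfQ); apply: imset_f.
- move=> P Q f [[gP gQ sP sQ fI] [b [Eb eb]]].
  have sfQ : f @: P \subset Q by case: fI.
  have fM : {in P &, {morph f : x y / x * y}} by case: fI.
  have gfP : group_set (f @: P) := group_set_img gP fM gP (subxx P).
  have sfS : f @: P \subset S by apply: subset_trans sQ.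
  have Eimg : b @: (th @: P) = th @: (f @: P).
    by rewrite -!imset_comp; apply: eq_in_imset => x xP /=; rewrite eb.
  have fI' : inj_hom P (f @: P) f by case: fI => ? ? _; split.
  split.
    split; first by split.
    by exists b; split=> //; rewrite -Eimg; apply: (fs_img EF Eb).
  have [g gK] : exists g, {in P, forall x, g (f x) = x}.
    by apply: inv_exists; case: fI.
  exists g; split=> //; split.
    by split=> //; apply: (inj_hom_inv gP fI gK).
  have [b' [Eb' b'K]] := fs_inv EF Eb.
  exists b'; split; first by rewrite -Eimg.
  move=> _ /imsetP[x xP ->]; rewrite gK // -eb // b'K //.
  exact: imset_f.
Qed.

Lemma G_gen P Q f : tree_generators Sv Fv P Q f -> G P Q f.
Proof.
case=> v [EQ Ff]; subst Q.
have [gP gQ sP _ fI] := fs_ax1 (Fvfs v) Ff.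
split; first by split=> //; [apply: subset_trans sP (Sv_sub v)|apply: Sv_sub].
have [H _ _] := Hco; have [_ _ Hom] := H v.
have [b [Eb eb]] := Hom P (Sv v) f sP (subxx _) Ff.
have e1 : psiv v @: P = th @: P.
  by apply: eq_in_imset => x xP; apply: psi_eq; apply: (subsetP sP).
have e2 : psiv v @: Sv v = th @: Sv v by apply: eq_in_imset; apply: psi_eq.
exists b; split; first by rewrite -e1 -e2.
move=> x xP; have xv : x \in Sv v by apply: (subsetP sP).
have fxv : f x \in Sv v.
  by case: fI => _ _ sf; apply: (subsetP sf); apply: imset_f.
by rewrite /th -(psi_eq xv) -(psi_eq fxv) eb.
Qed.

Lemma FT_G P R alpha : FT P R alpha -> G P R alpha.
Proof. exact: (gen_sub G_fs G_gen). Qed.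

End Universal.

End Tree.



Local Close Scope group_scope.

Theorem lemma2p3 (p : nat) (V Ed : finType) (ends : Ed -> V * V)
    (gT : finGroupType) (Sv : V -> {group gT}) (Se : Ed -> {group gT})
    (Fv : V -> fsys gT) (Fe : Ed -> fsys gT) (vstar : V) :
  tree_of_fusion_systems p ends Sv Se Fv Fe ->
  hypH ends Sv Se vstar ->
  let S := Sv vstar in
  let FT := gen_fusion S (tree_generators Sv Fv) in
  fs_colimit p ends Sv Se Fv Fe S FT /\
  (forall (P : {set gT}) (alpha : gT -> gT), FT P S alpha ->
     exists (n : nat) (vs : nat -> V) (Ps : nat -> {set gT})
            (alphas : nat -> gT -> gT),
       [/\ Ps 0 = P, Ps n = alpha @: P,
           (forall i, i.+1 < n -> adjacent ends (vs i) (vs i.+1)),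
           (forall i, i < n ->
              [/\ Ps i \subset Sv (vs i), Ps i.+1 \subset Sv (vs i)
                & Fv (vs i) (Ps i) (Ps i.+1) (alphas i)]) &
           {in P, alpha =1 chain_comp alphas n}]).
Proof.
move=> HT HH S FT0; rewrite {}/FT0 {}/S.
split.
- split.
  + by case: HT => _ _ H _ _; case: (H vstar).
  + exact: (FT_fs HT HH).
  + exact: (FT_cocone HT HH).
  + move=> rT T E psiv psie _ EF Hco.
    exists (psiv vstar); split.
    * split; [exact: (@thM _ _ _ _ _ _ _ _ vstar _ _ _ _ _ Hco) | exact: (thS vstar Hco) | ].
      move=> P R alpha sP sR H.
      have [_ [b [Eb eb]]] := FT_G HT HH EF Hco H.
      by exists b.
    * by move=> v x xv; symmetry; apply: (psi_eq HT HH Hco).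
    * move=> e x xe; have inc : incident ends e (ends e).1 by left.
      have [_ _ Hc] := Hco.
      rewrite (Hc e _ inc) //; symmetry; apply: (psi_eq HT HH Hco).
      by apply: (subsetP (Se_sub HT inc)).
    * by move=> th' _ Hv _ x xS; apply: Hv.
- move=> P alpha H; have [_ [f' [Cf ef]]] := FT_FC HT HH H.
  have [m [vs [Ps [al [[_ H0 Hn Had Hst] Hag]]]]] := ch_strict HT Cf.
  exists m.+1, vs, Ps, al; split=> //.
  + by rewrite Hn; symmetry; apply: eq_in_imset.
  + move=> i im; have F := Hst i im.
    by have [_ _ s1 s2 _] := fs_ax1 (Fvfs HT (vs i)) F; split.
  + by move=> x xP; rewrite ef // Hag.
Qed.
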